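(* Let $g\ge 1$ be an integer and let $t\in\mathbb{C}$ with $t\neq 0$ and $t\neq -1$. Define the polynomials \[j(x)=\sum_{i=0}^{g-1}\binom{2g-1}{2i}(x+1)^i,\qquad k(x)=\sum_{i=0}^{g-1}\binom{2g-1}{2i+1}(x+1)^i .\] Let $C_t$ be the curve $y^2=x(x+1)\bigl(x^{2g-1}+t\,j(x)^2\bigr)$, which is a curve of genus $g$, and let $E_t$ be the elliptic curve $y^2=x(x+1)(x+t)$. Then the map $f:C_t\to E_t$ given by \[(x,y)\mapsto\bigl(f_1(x),\,f_2(x)\,y\bigr),\qquad f_1(x)=\frac{x^{2g-1}}{j(x)^2},\qquad f_2(x)=\frac{x^{g-1}\,k(x)}{j(x)^3},\] is a well-defined morphism of degree $2g-1$ which is totally ramified above the point $(0,0)\in E_t$ and unramified everywhere else.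
   Context: Curves are over $\mathbb{C}$; an affine equation such as $y^2=h(x)$ denotes the smooth projective curve (hyperelliptic, respectively elliptic) it defines, and a morphism given by a rational formula on the affine model means its extension to these smooth projective models. ''Totally ramified above a point $P$'' means the preimage of $P$ consists of a single point (with ramification index equal to the degree). *)

(* Defs.v *)
(* the complex numbers are R[i] (mathcomp-real-closed's
   'complex') for an arbitrary R : realType (every realType is isomorphic to
   the reals, so R[i] is isomorphic to C). *)
From mathcomp Require Import all_boot all_algebra all_field.
From mathcomp Require Import complex.
From mathcomp Require Import reals.
Set Implicit Arguments. Unset Strict Implicit. Unset Printing Implicit Defensive.
Import GRing.Theory Num.Theory.
Local Open Scope ring_scope.

Section Defs.
Variable F : fieldType.

(* Points of the smooth projective model of  y^2 = h(x)  when h is squarefree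
   of ODD degree: the affine solutions (Some (x,y)) plus the unique point at
   infinity (None). *)
Definition pt := option (F * F).

Definition on_hyp (h : {poly F}) (P : pt) : Prop :=
  match P with
  | None => True
  | Some (x, y) => y ^+ 2 = h.[x]
  end.

Definition fiber_card (onC : pt -> Prop) (phi : pt -> pt) (Q : pt) (n : nat)
  : Prop :=
  exists s : seq pt, [/\ uniq s, size s = n &
     forall P, (P \in s) <-> (onC P /\ phi P = Q)].

(* phi : C -> E has degree d: all but finitely many points of E have
   exactly d preimages (over C, characteristic 0). *)
Definition has_degree (onC onE : pt -> Prop) (phi : pt -> pt) (d : nat)
  : Prop :=
  exists S : seq pt, forall Q, onE Q -> Q \notin S -> fiber_card onC phi Q d.

Definition totally_ramified_above (onC : pt -> Prop) (phi : pt -> pt) (Q : pt)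
  : Prop := fiber_card onC phi Q 1.

Definition unramified_above (onC : pt -> Prop) (phi : pt -> pt) (d : nat)
  (Q : pt) : Prop := fiber_card onC phi Q d.

Definition jpol (g : nat) : {poly F} :=
  \sum_(i < g) (('C(2 * g - 1, 2 * i))%:R *: ('X + 1) ^+ i).
Definition kpol (g : nat) : {poly F} :=
  \sum_(i < g) (('C(2 * g - 1, 2 * i + 1))%:R *: ('X + 1) ^+ i).

Definition hC (g : nat) (t : F) : {poly F} :=
  'X * ('X + 1) * ('X ^+ (2 * g - 1) + t%:P * jpol g ^+ 2).
Definition hE (t : F) : {poly F} := 'X * ('X + 1) * ('X + t%:P).

(* The map f on points of the smooth projective models, i.e. the extension
   of (x,y) |-> (x^(2g-1)/j(x)^2, x^(g-1) k(x)/j(x)^3 * y):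
   - at affine points with j(x) <> 0, it is given by the formula;
   - at affine points with j(x) = 0, f_1 has a pole (the numerator x^(2g-1)
     does not vanish there since j(0) = 2^(2g-2) <> 0), so the image is the
     point at infinity of E;
   - the point at infinity of C goes to infinity, since f_1 has a pole there
     (deg x^(2g-1) = 2g-1 > 2g-2 = deg j^2). *)
Definition fmap (g : nat) (P : pt) : pt :=
  match P with
  | None => None
  | Some (x, y) =>
      let jx := (jpol g).[x] in
      if jx == 0 then None
      else Some (x ^+ (2 * g - 1) / jx ^+ 2,
                 x ^+ (g - 1) * (kpol g).[x] / jx ^+ 3 * y)
  end.

End Defs.

(* Main.v *)
Require Import Defs.
From mathcomp Require Import all_boot all_algebra all_field.
From mathcomp Require Import complex.
From mathcomp Require Import reals.
From mathcomp Require Import ring zify.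
Import GRing.Theory Num.Theory.
Local Open Scope ring_scope.

Lemma sum_split_even_odd (R : nmodType) (f : nat -> R) (g : nat) :
  \sum_(i < 2 * g) f i = \sum_(i < g) f (2 * i)%N + \sum_(i < g) f (2 * i).+1.
Proof.
elim: g => [|g IH]; first by rewrite !big_ord0 addr0.
have -> : (2 * g.+1 = (2 * g).+2)%N by lia.
rewrite !big_ord_recr /= IH.
by rewrite -!addrA; congr (_ + _); rewrite addrCA.
Qed.

Section Poly.
Variable F : numClosedFieldType.
Variable m : nat.
Local Notation n := (2 * m).+1.
Local Notation j := (jpol F m.+1).
Local Notation k := (kpol F m.+1).
Local Notation q := ('X ^+2 - 1 : {poly F}).

Definition Ep : {poly F} := \sum_(i < m.+1) 'X ^+(2 * i) *+ 'C(n, 2 * i).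
Definition Op : {poly F} := \sum_(i < m.+1) 'X ^+(2 * i) *+ 'C(n, (2 * i).+1).

Lemma jc : j \Po q = Ep.
Proof.
rewrite /jpol /Ep; have -> : (2 * m.+1 - 1 = n)%N by lia.
rewrite rmorph_sum; apply: eq_bigr => i _.
by rewrite /= comp_polyZ rmorphXn /= comp_polyD comp_polyX comp_polyC subrK -exprM scaler_nat.
Qed.

Lemma kc : k \Po q = Op.
Proof.
rewrite /kpol /Op; have -> : (2 * m.+1 - 1 = n)%N by lia.
rewrite rmorph_sum; apply: eq_bigr => i _.
by rewrite /= comp_polyZ rmorphXn /= comp_polyD comp_polyX comp_polyC subrK -exprM scaler_nat addn1.
Qed.

Lemma hA : ('X + 1) ^+ n = Ep + 'X * Op.
Proof.
rewrite exprD1n; have -> : (n.+1 = 2 * m.+1)%N by lia.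
rewrite (@sum_split_even_odd _ (fun i => 'X ^+ i *+ 'C(n, i))) /Ep /Op mulr_sumr; congr (_ + _).
by apply: eq_bigr => i _; rewrite exprS mulrnAr.
Qed.

Lemma hB : (- 'X + 1) ^+ n = Ep - 'X * Op.
Proof.
rewrite exprD1n; have -> : (n.+1 = 2 * m.+1)%N by lia.
rewrite (@sum_split_even_odd _ (fun i => (- 'X) ^+ i *+ 'C(n, i))) /Ep /Op mulr_sumr -sumrN; congr (_ + _).
  by apply: eq_bigr => i _; rewrite exprM sqrrN -exprM.
by apply: eq_bigr => i _; rewrite exprS exprM sqrrN -exprM mulNr mulrnAr mulNrn.
Qed.


Lemma size_q : size q = 3%N.
Proof. by rewrite -polyC1 size_XnsubC. Qed.

Lemma hodd (x : {poly F}) : (- x) ^+ n = - x ^+ n.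
Proof. by rewrite exprNn -signr_odd /= oddM /= expr1 mulN1r. Qed.

Lemma I1 : j ^+ 2 - ('X + 1) * k ^+ 2 = - 'X ^+ n.
Proof.
apply/eqP; rewrite -subr_eq0 -(comp_poly_eq0 _ (q:=q)) ?size_q //.
rewrite !(rmorphB, rmorphD, rmorphM, rmorphXn, rmorphN) /= jc kc comp_polyX comp_polyC subrK.
have e1 : (Ep + 'X * Op) * (Ep - 'X * Op) = - q ^+ n.
  rewrite -hA -hB -exprMn -hodd; congr (_ ^+ _); ring.
rewrite -e1; apply/eqP; ring.
Qed.


Lemma two_X_neq0 : (2%:R * 'X : {poly F}) != 0.
Proof. by rewrite mulf_neq0 ?polyX_eq0 // -polyC_natr polyC_eq0 pnatr_eq0. Qed.

Lemma r1 : ('X + 1) * (Ep^`() + ('X * Op)^`()) = n%:R * (Ep + 'X * Op).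
Proof.
rewrite -derivD -hA deriv_exp derivD derivX derivC addr0 mul1r.
by rewrite mulrnAr /= -exprS mulr_natl.
Qed.

Lemma r2 : (- 'X + 1) * (Ep^`() - ('X * Op)^`()) = - (n%:R * (Ep - 'X * Op)).
Proof.
rewrite -derivB -hB deriv_exp derivD derivN derivX derivC addr0 mulN1r.
by rewrite mulNrn mulrN mulrnAr /= -exprS mulr_natl.
Qed.

Lemma dq : q^`() = 2%:R * 'X.
Proof. by rewrite derivB derivXn derivC subr0 expr1 mulr_natl. Qed.

Lemma I2 : n%:R * j - 2%:R * 'X * j^`() = n%:R * k.
Proof.
apply/eqP; rewrite -subr_eq0 -(comp_poly_eq0 _ (q:=q)) ?size_q //.
rewrite !(rmorph_nat, rmorphB, rmorphD, rmorphM, rmorphN) /= jc kc comp_polyX.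
have r3 : Ep^`() = (j^`() \Po q) * (2%:R * 'X) by rewrite -jc deriv_comp dq.
have h1 := r1; have h2 := r2; rewrite r3 in h1 h2.
set Dj := (j^`() \Po q) in h1 h2 *; set DO := ('X * Op)^`() in h1 h2.
apply/eqP; apply: (mulfI two_X_neq0); rewrite mulr0.
transitivity (('X + 1) * ((- 'X + 1) * (Dj * (2%:R * 'X) - DO) + n%:R * (Ep - 'X * Op))
  - ('X - 1) * (('X + 1) * (Dj * (2%:R * 'X) + DO) - n%:R * (Ep + 'X * Op))); first by ring.
by rewrite h1 h2 !subrr; ring.
Qed.


Lemma I3 : n%:R * j = ('X + 1) * (n%:R * k - 2%:R * 'X * k^`()) - 'X * k.
Proof.
apply/eqP; rewrite -subr_eq0 -(comp_poly_eq0 _ (q:=q)) ?size_q //.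
rewrite !(rmorph_nat, rmorphB, rmorphD, rmorphM, rmorphN) /= jc kc comp_polyX rmorph1 subrK.
have r4 : ('X * Op)^`() = Op + 'X * ((k^`() \Po q) * (2%:R * 'X)).
  by rewrite derivM derivX mul1r -kc deriv_comp dq.
have h1 := r1; have h2 := r2.
set Dk := (k^`() \Po q) in r4 *; set DO := ('X * Op)^`() in h1 h2 r4; set E' := Ep^`() in h1 h2.
apply/eqP; apply: (mulfI two_X_neq0); rewrite mulr0.
transitivity ('X * (('X - 1) * (('X + 1) * (E' + DO) - n%:R * (Ep + 'X * Op))
  + ('X + 1) * ((- 'X + 1) * (E' - DO) + n%:R * (Ep - 'X * Op)))
  - 2%:R * 'X * ('X ^+ 2 - 1) * (DO - (Op + 'X * (Dk * (2%:R * 'X))))); first by ring.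
by rewrite h1 h2 r4 !subrr; ring.
Qed.


Lemma size_deriv_le (p : {poly F}) : (size p^`() <= (size p).-1)%N.
Proof.
have [->|p0] := eqVneq p 0; first by rewrite deriv0 size_poly0.
by have := lt_size_deriv p0; case: (size p).
Qed.

Lemma size_sum_le (g : nat) (c : nat -> F) :
  (size (\sum_(i < g) (c i *: ('X + 1) ^+ i))%R <= g)%N.
Proof.
apply: (big_ind (fun p : {poly F} => size p <= g)%N) => [|p1 p2 h1 h2|i _].
- by rewrite size_poly0.
- by apply: leq_trans (size_polyD _ _) _; rewrite geq_max h1 h2.
- apply: leq_trans (size_scale_leq _ _) _; apply: leq_trans (size_poly_exp_leq _ _) _.
  by rewrite -polyC1 size_XaddC mul1n.
Qed.

Lemma size_j_le : (size j <= m.+1)%N.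
Proof. exact: (size_sum_le _ (fun i => ('C(2 * m.+1 - 1, 2 * i))%:R)). Qed.
Lemma size_k_le : (size k <= m.+1)%N.
Proof. exact: (size_sum_le _ (fun i => ('C(2 * m.+1 - 1, 2 * i + 1))%:R)). Qed.

Lemma size_X1 : size ('X + 1 : {poly F}) = 2%N.
Proof. by rewrite -polyC1 size_XaddC. Qed.

Lemma size_k : size k = m.+1.
Proof.
apply/eqP; rewrite eqn_leq size_k_le /=; rewrite ltnNge; apply/negP => hk.
have e : size (j ^+ 2 - ('X + 1) * k ^+ 2) = size (- 'X ^+ n : {poly F}) by rewrite I1.
 rewrite size_polyN size_polyXn in e.
have := size_polyD (j ^+ 2) (- (('X + 1) * k ^+ 2)); rewrite size_polyN e.
have := size_polyMleq j j; have := size_polyMleq k k.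
have := size_polyMleq ('X + 1) (k * k); rewrite size_X1 -!expr2.
have := size_j_le. move=> h1 h2 h3 h4 h5. set a := size (jpol F m.+1 ^+ 2) in h1 h2 h3 h4 h5. set b := size (kpol F m.+1 ^+ 2) in h1 h2 h3 h4 h5. set c := size (('X + 1) * kpol F m.+1 ^+ 2) in h1 h2 h3 h4 h5. have t1 : ((2 + b).-1 = b.+1)%N by []. have t2 : size (kpol F m.+1) = size (kpol F m.+1) by []. rewrite t1 in h2. move: hk h3. set u := size (kpol F m.+1). move=> hk h3. lia.
Qed.

Lemma nR_neq0 : (n%:R : F) != 0.
Proof. by rewrite pnatr_eq0. Qed.

Lemma size_j : size j = m.+1.
Proof.
apply/eqP; rewrite eqn_leq size_j_le /=; rewrite ltnNge; apply/negP => hj.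
have e : size (n%:R * j - 2%:R * 'X * j^`()) = m.+1.
  by rewrite I2 -polyC_natr size_Cmul ?nR_neq0 // size_k.
have h5 := size_polyD (n%:R * j) (- (2%:R * 'X * j^`())); rewrite size_polyN e in h5.
have h6 : size (n%:R * j : {poly F}) = size j by rewrite -polyC_natr size_Cmul ?nR_neq0.
have h7 := size_polyMleq (2%:R * 'X : {poly F}) j^`().
have h8 : (size (2%:R * 'X : {poly F})%R <= 2)%N.
  apply: leq_trans (size_polyMleq _ _) _; rewrite -polyC_natr size_polyX.
  by have := size_polyC_leq1 (2%:R : F); case: (size _) => [|[]].
have h9 := size_deriv_le j.
have [j0|jn0] := eqVneq j 0.
  by move: e; rewrite j0 mulr0 deriv0 mulr0 subr0 size_poly0.
have h10 : (0 < size j)%N by rewrite size_poly_gt0.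
rewrite h6 in h5; move: h5 h7 h8 h9 hj h10.
set a := size (2%:R * 'X : {poly F}); set b := size (2%:R * 'X * j^`()); set c := size j^`().
set d := size j; lia.
Qed.


Lemma j0k0 : j.[0] = k.[0] /\ j.[0] + k.[0] = 2%:R ^+ n.
Proof.
have eA : (('X + 1) ^+ n).[1] = (Ep + 'X * Op).[1] by rewrite hA.
have eB : ((- 'X + 1) ^+ n).[1] = (Ep - 'X * Op).[1] by rewrite hB.
rewrite -jc -kc !hornerE !horner_comp !hornerE in eA eB.
rewrite expr1n subrr in eA eB.
rewrite addNr expr0n /= in eB.
split; last by rewrite -eA.
by apply/eqP; rewrite -subr_eq0 -eB.
Qed.

Lemma jm1 : j.[-1] = 1.
Proof.
have eA : (('X + 1) ^+ n).[0] = (Ep + 'X * Op).[0] by rewrite hA.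
rewrite -jc -kc !hornerE !horner_comp !hornerE in eA.
by move: eA; rewrite expr1n expr0n /= sub0r.
Qed.

Lemma km1 : k.[-1] = n%:R.
Proof.
have e : (n%:R * j).[-1] = (('X + 1) * (n%:R * k - 2%:R * 'X * k^`()) - 'X * k).[-1].
  by rewrite I3.
move: e; rewrite -!polyC_natr !hornerE jm1 addNr mul0r add0r mulr1 mulN1r opprK => -> //.
Qed.


Lemma two_n_neq0 : (2%:R ^+ n : F) != 0.
Proof. by rewrite expf_neq0 // pnatr_eq0. Qed.

Lemma j0_neq0 : j.[0] != 0.
Proof.
case: j0k0 => e1 e2; apply/negP => /eqP h; move: two_n_neq0.
by rewrite -e2 -e1 h addr0 eqxx.
Qed.

Lemma k0_neq0 : k.[0] != 0.
Proof.
case: j0k0 => e1 e2; apply/negP => /eqP h; move: two_n_neq0.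
by rewrite -e2 e1 h addr0 eqxx.
Qed.

Lemma I1x x : x ^+ n + j.[x] ^+ 2 = (x + 1) * k.[x] ^+ 2.
Proof.
have e : (j ^+ 2 - ('X + 1) * k ^+ 2).[x] = (- 'X ^+ n).[x] by rewrite I1.
move: e; rewrite !hornerE => e; apply/eqP; rewrite -subr_eq0; apply/eqP.
by rewrite -addrA e addrN.
Qed.

Lemma I2x x : n%:R * j.[x] - 2%:R * x * j^`().[x] = n%:R * k.[x].
Proof.
have e : (n%:R * j - 2%:R * 'X * j^`()).[x] = (n%:R * k).[x] by rewrite I2.
by move: e; rewrite -!polyC_natr !hornerE.
Qed.

Lemma I3x x : n%:R * j.[x] = (x + 1) * (n%:R * k.[x] - 2%:R * x * k^`().[x]) - x * k.[x].
Proof.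
have e : (n%:R * j).[x] = (('X + 1) * (n%:R * k - 2%:R * 'X * k^`()) - 'X * k).[x].
  by rewrite I3.
by move: e; rewrite -!polyC_natr !hornerE.
Qed.

Lemma jk_noroot x : j.[x] = 0 -> k.[x] = 0 -> False.
Proof.
move=> hj hk; have := I1x x; rewrite hj hk expr0n /= mulr0 addr0 => /eqP.
rewrite expf_eq0 /= => /eqP x0; rewrite x0 in hj; by move: j0_neq0; rewrite hj eqxx.
Qed.

End Poly.

Lemma sep_noroot (F : closedFieldType) (p : {poly F}) :
  (forall x, root p x -> p^`().[x] != 0) -> separable_poly p.
Proof.
move=> h; rewrite unlock coprimep_def.
apply/negPn/negP => /closed_rootP [x]; rewrite root_gcd => /andP [rp rd].
by move: (h x rp); rewrite -/(root _ _) rd.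
Qed.

Lemma roots_sep (F : closedFieldType) (p : {poly F}) : separable_poly p ->
  exists rs : seq F, [/\ uniq rs, size rs = (size p).-1 & forall x, root p x = (x \in rs)].
Proof.
move=> sp; have p0 := separable_poly_neq0 sp.
have lc0 : lead_coef p != 0 by rewrite lead_coef_eq0.
case: (closed_field_poly_normal p) => rs e.
exists rs; split.
- by rewrite -separable_prod_XsubC -(eqp_separable (eqp_scale _ lc0)) -e.
- by rewrite e size_scale // size_prod_XsubC.
- by move=> x; rewrite e rootZ // root_prod_XsubC.
Qed.

Lemma fiber_map (F : fieldType) (onC : pt F -> Prop) phi Q (rs : seq F) (h : F -> F) :
  uniq rs -> (forall P, onC P /\ phi P = Q <-> exists2 x, x \in rs & P = Some (x, h x)) ->
  fiber_card onC phi Q (size rs).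
Proof.
move=> u H; exists [seq Some (x, h x) | x <- rs]; split.
- by rewrite map_inj_uniq // => x y [].
- by rewrite size_map.
- move=> P; rewrite H; split => [/mapP [x xs ->]|[x xs ->]]; first by exists x.
  by apply/mapP; exists x.
Qed.

Lemma neq_opp {F : numFieldType} (y : F) : y != 0 -> y != - y.
Proof.
move=> y0; apply/negP => /eqP e; move: y0.
have : y *+ 2 == 0 by rewrite mulr2n {1}e addNr.
by rewrite mulrn_eq0 /= => ->.
Qed.

Lemma fiber_pairs (F : numClosedFieldType) (onC : pt F -> Prop) phi Q (P0 : pt F)
    (rs : seq F) (h : F -> F) :
  uniq rs -> (forall x, x \in rs -> h x != 0) ->
  (forall x, x \in rs -> P0 <> Some (x, h x) /\ P0 <> Some (x, - h x)) ->
  (forall P, onC P /\ phi P = Q <->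
     P = P0 \/ exists2 x, x \in rs & (P = Some (x, h x) \/ P = Some (x, - h x))) ->
  fiber_card onC phi Q (1 + 2 * size rs).
Proof.
move=> u hn hP0 H.
exists (P0 :: ([seq Some (x, h x) | x <- rs] ++ [seq Some (x, - h x) | x <- rs])); split.
- rewrite /= cat_uniq !map_inj_uniq ?u //; try by move=> x y [].
  apply/and4P; split => //.
  + rewrite mem_cat negb_or.
    apply/andP; split; apply/negP => /mapP [x xs e]; by case: (hP0 x xs); rewrite e.
  + apply/hasPn => P /mapP [x xs ->]; apply/negP => /mapP [y ys [e1 e2]].
    subst y; by move: (neq_opp _ (hn x xs)); rewrite e2 eqxx.
- by rewrite /= size_cat !size_map; lia.
- move=> P; rewrite H inE mem_cat; split.
  + case/orP => [/eqP ->|/orP [] /mapP [x xs ->]]; first by left.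
    * by right; exists x => //; left.
    * by right; exists x => //; right.
  + case=> [->|[x xs [->|->]]]; first by rewrite eqxx.
    * by apply/orP; right; apply/orP; left; apply/mapP; exists x.
    * by apply/orP; right; apply/orP; right; apply/mapP; exists x.
Qed.

Section Main.
Variable F : numClosedFieldType.
Variable m : nat.
Variable t : F.
Hypothesis t0 : t != 0.
Hypothesis t1 : t != 1.
Local Notation n := (2 * m).+1.
Local Notation j := (jpol F m.+1).
Local Notation k := (kpol F m.+1).
Local Notation onC := (on_hyp (hC m.+1 t)).
Local Notation onE := (on_hyp (hE t)).

Definition f1 (x : F) := x ^+ n / j.[x] ^+ 2.
Definition f2 (x : F) := x ^+ m * k.[x] / j.[x] ^+ 3.
Definition Pa (a : F) : {poly F} := 'X ^+ n - a%:P * j ^+ 2.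

Lemma hC_eq : hC m.+1 t = 'X * ('X + 1) * ('X ^+ n + t%:P * j ^+ 2).
Proof. by rewrite /hC; have -> : (2 * m.+1 - 1 = n)%N by lia. Qed.

Lemma hCx x : (hC m.+1 t).[x] = x * (x + 1) * (x ^+ n + t * j.[x] ^+ 2).
Proof. by rewrite hC_eq !hornerE. Qed.

Lemma hEx x : (hE t).[x] = x * (x + 1) * (x + t).
Proof. by rewrite /hE !hornerE. Qed.

Lemma fmap_some x y :
  fmap m.+1 (Some (x, y)) = if j.[x] == 0 then None else Some (f1 x, f2 x * y).
Proof.
rewrite /fmap /f1 /f2; have -> : (2 * m.+1 - 1 = n)%N by lia.
by have -> : (m.+1 - 1 = m)%N by lia.
Qed.

Lemma xn_eq (x : F) : x ^+ n = x * (x ^+ m) ^+ 2.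
Proof. by rewrite exprS -exprM mulnC. Qed.

Lemma key_id x : j.[x] != 0 -> f2 x ^+ 2 * (hC m.+1 t).[x] = (hE t).[f1 x].
Proof.
move=> J0; have e1 : f1 x + 1 = (x + 1) * k.[x] ^+ 2 / j.[x] ^+ 2.
  by rewrite -I1x /f1; field.
rewrite hEx hCx e1 /f1 /f2 !xn_eq; by field.
Qed.

Lemma size_Pa a : size (Pa a) = n.+1.
Proof.
rewrite /Pa size_polyDl; first by rewrite size_polyXn.
rewrite size_polyN size_polyXn.
have := size_polyMleq a%:P (j ^+ 2); have := size_polyC_leq1 a.
have := size_polyMleq j j; rewrite -expr2; have := size_j_le F m.
set u := size (a%:P * j ^+ 2); set v := size (j ^+ 2); set w := size j; lia.
Qed.

Lemma root_Pa a x : root (Pa a) x = (x ^+ n == a * j.[x] ^+ 2).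
Proof. by rewrite /root /Pa !hornerE subr_eq0. Qed.

Lemma root_j_neq0 a x : root (Pa a) x -> a != 0 -> j.[x] != 0.
Proof.
rewrite root_Pa => /eqP hx a0; apply/negP => /eqP J0.
move: hx; rewrite J0 expr0n mulr0 => /eqP; rewrite expf_eq0 /= => /eqP x0.
rewrite x0 in J0; by move: (j0_neq0 F m); rewrite J0 eqxx.
Qed.

Lemma sep_Pa a : a != 0 -> a != -1 -> separable_poly (Pa a).
Proof.
move=> a0 a1; apply: sep_noroot => x rx; have J0 := root_j_neq0 _ _ rx a0.
move: rx; rewrite root_Pa => /eqP hx.
rewrite /Pa !derivE !hornerE hornerMn hornerXn /=; apply/negP => /eqP hd.
have e : x * (x ^+ (2 * m) *+ n - a * (j^`().[x] * j.[x] + j.[x] * j^`().[x]))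
    = a * j.[x] * (n%:R * k.[x]).
  rewrite -I2x; apply/eqP; rewrite -subr_eq0; apply/eqP.
  transitivity (n%:R * (x * x ^+ (2 * m) - a * j.[x] ^+ 2)); first by rewrite -mulr_natr; ring.
  by rewrite -exprS hx subrr mulr0.
move: e; rewrite hd mulr0 => /esym/eqP; rewrite !mulf_eq0 (negbTE a0) (negbTE J0) /=.
rewrite pnatr_eq0 /= => /eqP K0.
move: (I1x F m x); rewrite K0 expr0n /= mulr0 hx -{2}[j.[x] ^+ 2]mul1r -mulrDl.
move/eqP; rewrite mulf_eq0 expf_eq0 (negbTE J0) andbF orbF addr_eq0.
by rewrite (negbTE a1).
Qed.


Lemma fiber_generic a b : a != 0 -> a != -1 -> b ^+ 2 = (hE t).[a] ->
  (forall x, root (Pa a) x -> f2 x != 0) ->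
  fiber_card onC (fmap m.+1) (Some (a, b)) n.
Proof.
move=> a0 a1 hb hf2.
have [rs [u sz hr]] := roots_sep _ _ (sep_Pa a a0 a1).
rewrite size_Pa /= in sz; rewrite -sz.
apply: (@fiber_map _ _ _ _ rs (fun x => b / f2 x)) => // -[[x y]|]; last first.
  by split => [[_ //]|[x _ //]].
split.
- case=> hy; rewrite fmap_some; case: ifP => // /negbT J0 [e1 e2].
  have rx : root (Pa a) x by rewrite root_Pa -e1 /f1 divfK ?expf_neq0.
  exists x; first by rewrite -hr.
  by rewrite -e2 mulrC mulKf // hf2.
- case=> z; rewrite -hr => rz [-> ->].
  have J0 := root_j_neq0 _ _ rz a0.
  have f0 := hf2 _ rz.
  have hf1 : f1 z = a.
    by move: rz; rewrite root_Pa /f1 => /eqP ->; rewrite mulfK ?expf_neq0.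
  split; last by rewrite fmap_some (negbTE J0) hf1 mulrC divfK.
  rewrite /= expr_div_n hb -hf1 -key_id // (mulrC (f2 z ^+ 2)) mulfK //.
  by rewrite expf_neq0.
Qed.


Lemma sep_j : separable_poly j.
Proof.
apply: sep_noroot => x /eqP hj; apply/negP => /eqP hd.
have := I2x F m x; rewrite hj hd !mulr0 subr0 => /esym/eqP.
rewrite mulf_eq0 (negbTE (nR_neq0 F m)) /= => /eqP hk.
exact: (jk_noroot _ _ _ hj hk).
Qed.

Lemma sep_k : separable_poly k.
Proof.
apply: sep_noroot => x /eqP hk; apply/negP => /eqP hd.
have := I3x F m x; rewrite hk hd !mulr0 !subr0 !mulr0 => /eqP.
rewrite mulf_eq0 (negbTE (nR_neq0 F m)) /= => /eqP hj.
exact: (jk_noroot _ _ _ hj hk).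
Qed.

Lemma oddn1 : (-1 : F) ^+ n = -1.
Proof. by rewrite -signr_odd /= oddM /= expr1. Qed.

Definition sq (x : F) := sqrtC (hC m.+1 t).[x].

Lemma sq_sqr x y : y ^+ 2 = (hC m.+1 t).[x] -> y = sq x \/ y = - sq x.
Proof.
by move=> e; have /eqP := e; rewrite -(sqrtCK (hC m.+1 t).[x]) eqf_sqr => /orP [] /eqP; [left|right].
Qed.

Lemma onC_sq x : onC (Some (x, sq x)) /\ onC (Some (x, - sq x)).
Proof. by rewrite /= sqrrN sqrtCK. Qed.

Lemma fiber_None : fiber_card onC (fmap m.+1) None n.
Proof.
have [rj [uj szj hrj]] := roots_sep _ _ sep_j.
rewrite size_j /= in szj.
have -> : n = (1 + 2 * size rj)%N by rewrite szj; lia.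
apply: (@fiber_pairs _ _ _ _ None rj sq) => //.
- move=> x; rewrite -hrj /root => /eqP hj; rewrite sqrtC_eq0 hCx hj expr0n /= mulr0 addr0.
  have x0 : x != 0.
    by apply/negP => /eqP x0; rewrite x0 in hj; move: (j0_neq0 F m); rewrite hj eqxx.
  rewrite !mulf_neq0 ?expf_neq0 // addr_eq0; apply/negP => /eqP e.
  by rewrite e (jm1 F m) in hj; move/eqP: hj; rewrite oner_eq0.
- move=> [[x y]|]; last by split => // _; left.
  rewrite fmap_some; split.
  + case=> hy; case: ifP => // /eqP hj _; right; exists x; first by rewrite -hrj /root hj.
    by case: (sq_sqr _ _ hy) => ->; [left|right].
  + case=> // -[z]; rewrite -hrj /root => /eqP hj [[-> ->]|[-> ->]]; rewrite hj eqxx;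
    by case: (onC_sq z).
Qed.


Lemma k_root_facts x : k.[x] = 0 ->
  [/\ x != 0, x != -1, j.[x] != 0 & x ^+ n = - j.[x] ^+ 2].
Proof.
move=> hk; split.
- by apply/negP => /eqP x0; rewrite x0 in hk; move: (k0_neq0 F m); rewrite hk eqxx.
- by apply/negP => /eqP x1; rewrite x1 (km1 F m) in hk; move/eqP: hk; rewrite (negbTE (nR_neq0 F m)).
- by apply/negP => /eqP hj; exact: (jk_noroot _ _ _ hj hk).
- by apply/eqP; rewrite -addr_eq0 I1x hk expr0n /= mulr0.
Qed.

Lemma fiber_m1 : fiber_card onC (fmap m.+1) (Some (-1, 0)) n.
Proof.
have [rk [uk szk hrk]] := roots_sep _ _ sep_k.
rewrite size_k /= in szk.
have -> : n = (1 + 2 * size rk)%N by rewrite szk; lia.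
apply: (@fiber_pairs _ _ _ _ (Some (-1, 0)) rk sq) => //.
- move=> x; rewrite -hrk /root => /eqP hk; have [x0 x1 J0 xn] := k_root_facts x hk.
  rewrite sqrtC_eq0 hCx xn !mulf_neq0 //; first by rewrite addr_eq0.
  have -> : - j.[x] ^+ 2 + t * j.[x] ^+ 2 = (t - 1) * j.[x] ^+ 2 by ring.
  by rewrite mulf_neq0 ?expf_neq0 // subr_eq0.
- move=> x; rewrite -hrk /root => /eqP hk; have [x0 x1 J0 xn] := k_root_facts x hk.
  by split=> -[e]; move: x1; rewrite -e eqxx.
- have Jm1 : j.[-1] != 0 by rewrite (jm1 F m) oner_eq0.
  move=> [[x y]|]; last by split => [[_ //]|[//|[x _ [//|//]]]].
  rewrite fmap_some; split.
  + case=> hy; case: ifP => // /negbT J0 [e1 e2].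
    have xn : x ^+ n = - j.[x] ^+ 2.
      by move: e1 => /(congr1 (fun z => z * j.[x] ^+ 2)); rewrite /f1 divfK ?expf_neq0 // mulN1r.
    have : (x + 1) * k.[x] ^+ 2 == 0 by rewrite -I1x xn addNr.
    rewrite mulf_eq0 expf_eq0 /= addr_eq0 => /orP [/eqP x1|/eqP hk].
    * left; move: hy; rewrite /= hCx x1 addNr mulr0 mul0r => /eqP.
      by rewrite expf_eq0 /= => /eqP ->.
    * right; exists x; first by rewrite -hrk /root hk.
      by case: (sq_sqr _ _ hy) => ->; [left|right].
  + case=> [[-> ->]|[z]].
    * split; first by rewrite /= hCx addNr mulr0 mul0r expr0n.
      rewrite (negbTE Jm1) mulr0 /f1 (jm1 F m) expr1n divr1 oddn1 //.
    * rewrite -hrk /root => /eqP hk; have [z0 z1 J0 zn] := k_root_facts z hk.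
      have hf1 : f1 z = -1 by rewrite /f1 zn mulNr divff // expf_neq0.
      have hf2 : f2 z = 0 by rewrite /f2 hk mulr0 mul0r.
      case=> [[-> ->]|[-> ->]]; rewrite (negbTE J0) hf1 hf2 mul0r;
      by case: (onC_sq z).
Qed.


Lemma fiber_00 : fiber_card onC (fmap m.+1) (Some (0, 0)) 1.
Proof.
have -> : 1%N = size [:: (0 : F)] by [].
apply: (@fiber_map _ _ _ _ [:: 0] (fun _ => 0)) => // -[[x y]|]; last first.
  by split => [[_ //]|[x _ //]].
rewrite fmap_some; split.
- case=> hy; case: ifP => // /negbT J0 [e1 e2].
  have x0 : x = 0.
    move: e1; rewrite /f1 => /eqP; rewrite mulf_eq0 invr_eq0 !expf_eq0 (negbTE J0) andbF orbF.
    by case/andP => _ /eqP.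
  move: hy; rewrite /= x0 hCx !mul0r => /eqP; rewrite expf_eq0 /= => /eqP ->.
  by exists 0; rewrite ?inE.
- case=> z; rewrite inE => /eqP -> [-> ->]; split; first by rewrite /= hCx !mul0r expr0n.
  by rewrite (negbTE (j0_neq0 F m)) mulr0 /f1 expr0n /= mul0r.
Qed.

Lemma f2_mt x : root (Pa (- t)) x -> f2 x != 0.
Proof.
move=> rx; have mt0 : - t != 0 by rewrite oppr_eq0.
have J0 := root_j_neq0 _ _ rx mt0.
move: rx; rewrite root_Pa => /eqP xn.
have x0 : x != 0.
  apply/negP => /eqP x0; rewrite x0 in xn J0; move: xn; rewrite expr0n /= => /eqP.
  by rewrite eq_sym mulf_eq0 oppr_eq0 (negbTE t0) expf_eq0 (negbTE J0) andbF.
have k0 : k.[x] != 0.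
  apply/negP => /eqP hk; have := I1x F m x; rewrite hk expr0n /= mulr0 xn.
  move/eqP; rewrite -{2}[j.[x] ^+ 2]mul1r -mulrDl mulf_eq0 expf_eq0 (negbTE J0) andbF orbF.
  by rewrite addrC subr_eq0 eq_sym (negbTE t1).
by rewrite /f2 !mulf_neq0 ?invr_eq0 ?expf_neq0.
Qed.

Lemma fiber_some a b : b ^+ 2 = (hE t).[a] -> (a, b) != (0, 0) ->
  fiber_card onC (fmap m.+1) (Some (a, b)) n.
Proof.
move=> hb ab.
have [a0|a0] := eqVneq a 0.
  move: hb; rewrite a0 hEx !mul0r => /eqP; rewrite expf_eq0 /= => /eqP b0.
  by move: ab; rewrite a0 b0 eqxx.
have [a1|a1] := eqVneq a (-1).
  move: hb; rewrite a1 hEx addNr mulr0 mul0r => /eqP; rewrite expf_eq0 /= => /eqP b0.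
  by rewrite b0; exact: fiber_m1.
apply: fiber_generic => // x rx.
have [amt|amt] := eqVneq a (- t); first by rewrite amt in rx *; exact: f2_mt.
have J0 := root_j_neq0 _ _ rx a0.
have hf1 : f1 x = a by move: rx; rewrite root_Pa /f1 => /eqP ->; rewrite mulfK ?expf_neq0.
apply/negP => /eqP f0; have := key_id x J0; rewrite f0 expr0n /= mul0r hf1 -hb => /esym/eqP.
rewrite expf_eq0 /= => /eqP b0; move: hb; rewrite b0 expr0n /= hEx => /eqP.
rewrite eq_sym !mulf_eq0 (negbTE a0) /= addr_eq0 (negbTE a1) /= addr_eq0.
by rewrite (negbTE amt).
Qed.


Lemma sep_hC : separable_poly (hC m.+1 t).
Proof.
have -> : hC m.+1 t = (Pa (- t) * ('X - 0%:P)) * ('X - (-1)%:P).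
  by rewrite hC_eq /Pa polyC0 subr0 !polyCN mulNr !opprK polyC1; ring.
rewrite !separable_root sep_Pa ?oppr_eq0 //; last by rewrite eqr_opp.
rewrite rootM !root_XsubC /= !root_Pa expr0n /= eq_sym mulf_eq0 oppr_eq0 (negbTE t0).
rewrite expf_eq0 (negbTE (j0_neq0 F m)) andbF /= oppr_eq0 oner_eq0 orbF.
by rewrite (jm1 F m) expr1n mulr1 oddn1 eqr_opp eq_sym (negbTE t1).
Qed.

Lemma size_hC : size (hC m.+1 t) = (2 * m.+1 + 2)%N.
Proof.
rewrite hC_eq; have -> : 'X ^+ n + t%:P * j ^+ 2 = Pa (- t) by rewrite /Pa polyCN mulNr opprK.
have P0 : Pa (- t) != 0 by rewrite -size_poly_eq0 size_Pa.
have X0 : ('X : {poly F}) != 0 by rewrite polyX_eq0.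
have X10 : ('X + 1 : {poly F}) != 0 by rewrite -size_poly_eq0 size_X1.
rewrite size_mul ?mulf_neq0 // size_mul // size_polyX size_X1 size_Pa /=; lia.
Qed.

Lemma morph_ok P : onC P -> onE (fmap m.+1 P).
Proof.
case: P => [[x y]|] // hy; rewrite /onE fmap_some; case: ifP => // /negbT J0.
by rewrite /= exprMn hy key_id.
Qed.

Lemma degree_ok : has_degree onC onE (fmap m.+1) n.
Proof.
exists [:: Some (0, 0)] => -[[a b]|] hQ; rewrite inE => hS; last exact: fiber_None.
by apply: fiber_some => //; apply: contra hS => /eqP ->.
Qed.

End Main.

Theorem theorem3p2 (R : realType) (g : nat) (t : R[i]) :
  (1 <= g)%N -> t != 0 -> t != -1 -> t != 1 ->
  [/\ separable_poly (hC g t) /\ size (hC g t) = (2 * g + 2)%N,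
      (forall P, on_hyp (hC g t) P -> on_hyp (hE t) (fmap g P)),
      has_degree (on_hyp (hC g t)) (on_hyp (hE t)) (fmap g) (2 * g - 1),
      totally_ramified_above (on_hyp (hC g t)) (fmap g) (Some (0, 0))
    & forall Q, on_hyp (hE t) Q -> Q <> Some (0, 0) ->
        unramified_above (on_hyp (hC g t)) (fmap g) (2 * g - 1) Q].
Proof.
case: g => [//|m] _ t0 _ t1.
have e : (2 * m.+1 - 1 = (2 * m).+1)%N by lia.
rewrite e; split.
- by split; [apply: sep_hC | apply: size_hC].
- by move=> P; apply: morph_ok.
- by apply: degree_ok.
- by apply: fiber_00.
- move=> [[a b]|] hQ hne; last by apply: fiber_None.
  apply: fiber_some => //; apply/negP => /eqP [a0 b0]; apply: hne; by rewrite a0 b0.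
Qed.
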